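(* For every $n>8$, if $\Delta,\Delta'\in\mathcal{P}_n$ form a special pair for rule $160$, then $lab_\Delta$ and $lab_{\Delta'}$ differ on exactly one arc among the $2n$ arcs $(i,i+1)$, $(i+1,i)$, $i\in\mathbb{Z}_n$.
   Context: Cells are indexed by $\mathbb{Z}_n=\{0,\dots,n-1\}$, indices modulo $n$. Rule $160$ has local rule $r_{160}(x_1,x_2,x_3)=x_1\wedge x_3$ and global function $f_{160,n}(x)_i=r_{160}(x_{i-1},x_i,x_{i+1})$. An update schedule is an ordered partition $\Delta=(\Delta_1,\dots,\Delta_k)$ of $\mathbb{Z}_n$ into nonempty blocks; $\mathcal{P}_n$ is the set of them. For a block $B$ let $f^{(B)}(x)_i=f_{160,n}(x)_i$ if $i\in B$ and $x_i$ otherwise; $f^{(\Delta)}_{160,n}=f^{(\Delta_k)}\circ\cdots\circ f^{(\Delta_1)}$. For $u,v\in\mathbb{Z}_n$ with $u\in\Delta_a$, $v\in\Delta_b$, $lab_\Delta((u,v))=\oplus$ if $b\le a$ and $\ominus$ if $a<b$. $\Delta\equiv\Delta'$ iff $lab_\Delta$ and $lab_{\Delta'}$ agree on every arc $(i,i+1)$ and $(i+1,i)$. A pair $\Delta,\Delta'$ is special for rule $160$ if $\Delta\not\equiv\Delta'$ but $f^{(\Delta)}_{160,n}=f^{(\Delta')}_{160,n}$. *)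

(* Defs.v *)
From mathcomp Require Import all_boot.
Set Implicit Arguments. Unset Strict Implicit. Unset Printing Implicit Defensive.

Lemma ord_pos n (i : 'I_n) : 0 < n.
Proof. exact: leq_ltn_trans (leq0n i) (ltn_ord i). Qed.

Definition nxt n (i : 'I_n) : 'I_n := Ordinal (ltn_pmod i.+1 (ord_pos i)).
Definition prv n (i : 'I_n) : 'I_n := Ordinal (ltn_pmod (i + n.-1) (ord_pos i)).

Definition config n := {ffun 'I_n -> bool}.

Definition f160 n (x : config n) : config n :=
  [ffun i => x (prv i) && x (nxt i)].

(* An ordered partition (Delta_1,...,Delta_k) of Z_n into nonempty blocks is
   encoded by a surjective map d : 'I_n -> 'I_k, with i in Delta_{j+1} iff d i = j. *)
Definition ordered_partition n k (d : 'I_n -> 'I_k) : Prop :=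
  forall j : 'I_k, exists i : 'I_n, d i = j.

Definition block_update n k (d : 'I_n -> 'I_k) (j : 'I_k) (x : config n) : config n :=
  [ffun i => if d i == j then f160 x i else x i].

Definition f160_sched n k (d : 'I_n -> 'I_k) (x : config n) : config n :=
  foldl (fun y j => block_update d j y) x (enum 'I_k).

(* lab_Delta((u,v)) = (+) (true) iff block(v) <= block(u); (-) (false) otherwise *)
Definition lab n k (d : 'I_n -> 'I_k) (u v : 'I_n) : bool := (d v <= d u)%N.

Definition sched_equiv n k k' (d : 'I_n -> 'I_k) (d' : 'I_n -> 'I_k') : Prop :=
  forall i : 'I_n, lab d i (nxt i) = lab d' i (nxt i) /\ lab d (nxt i) i = lab d' (nxt i) i.

Definition special160 n k k' (d : 'I_n -> 'I_k) (d' : 'I_n -> 'I_k') : Prop :=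
  ~ sched_equiv d d' /\ f160_sched d =1 f160_sched d'.

Definition n_diff_arcs n k k' (d : 'I_n -> 'I_k) (d' : 'I_n -> 'I_k') : nat :=
  #|[set i : 'I_n | lab d i (nxt i) != lab d' i (nxt i)]|
  + #|[set i : 'I_n | lab d (nxt i) i != lab d' (nxt i) i]|.

(* Main.v *)
Require Import Defs.
From mathcomp Require Import all_boot zify.
Set Implicit Arguments. Unset Strict Implicit. Unset Printing Implicit Defensive.

Ltac cif := repeat (match goal with H : context[if _ then _ else _] |- _ => revert H end);
  repeat match goal with |- context[if ?b then _ else _] =>
    lazymatch b with context[if _ then _ else _] => fail | _ => case: (boolP b) => ? end end.

Lemma val_nxt n (i : 'I_n) : nat_of_ord (nxt i) = if i.+1 == n then 0 else i.+1.
Proof.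
rewrite /nxt /=; have := ltn_ord i; case: eqP => [->|h] lt; first by rewrite modnn.
rewrite modn_small //; lia.
Qed.

Lemma val_prv n (i : 'I_n) : nat_of_ord (prv i) = if nat_of_ord i == 0 then n.-1 else (nat_of_ord i).-1.
Proof.
rewrite /prv /=; have := ltn_ord i; case: eqP => [->|h] lt.
  by rewrite add0n modn_small //; lia.
have -> : i + n.-1 = (i.-1) + n by lia.
rewrite modnDr modn_small //; lia.
Qed.

Lemma prv_nxt n (i : 'I_n) : prv (nxt i) = i.
Proof. apply: val_inj; rewrite -[val _]/(nat_of_ord _) val_prv val_nxt; have := ltn_ord i; cif => /=; lia. Qed.

Lemma nxt_prv n (i : 'I_n) : nxt (prv i) = i.
Proof. apply: val_inj; rewrite -[val _]/(nat_of_ord _) val_nxt val_prv; have := ltn_ord i; cif => /=; lia. Qed.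

Lemma nxt_inj n : injective (@nxt n).
Proof. by move=> i j /(congr1 (@prv n)); rewrite !prv_nxt. Qed.

Fixpoint zst n k (d : 'I_n -> 'I_k) (x : config n) (t : nat) : config n :=
  if t is t'.+1 then [ffun i => if nat_of_ord (d i) == t' then f160 (zst d x t') i else zst d x t' i]
  else x.

Lemma sched_z n k (d : 'I_n -> 'I_k) x : f160_sched d x = zst d x k.
Proof.
rewrite /f160_sched.
have E : forall (s : seq 'I_k) y, foldl (fun y j => block_update d j y) y s =
   foldl (fun y (t : nat) => [ffun i => if nat_of_ord (d i) == t then f160 y i else y i]) y (map (@nat_of_ord k) s).
  elim=> [|j s IH] y //=; rewrite IH; congr foldl; apply/ffunP=> i; rewrite !ffunE //.
rewrite E; have -> : map (@nat_of_ord k) (enum 'I_k) = iota 0 k by exact: val_enum_ord.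
have G : forall t, foldl (fun y (t : nat) => [ffun i => if nat_of_ord (d i) == t then f160 y i else y i]) x (iota 0 t) = zst d x t.
  elim=> [|t IH] //.
  by rewrite -addn1 iotaD foldl_cat IH /= add0n addn1.
exact: G.
Qed.

Lemma z_early n k (d : 'I_n -> 'I_k) x t i : t <= d i -> zst d x t i = x i.
Proof.
elim: t => [|t IH] h //=; rewrite ffunE.
have -> : (nat_of_ord (d i) == t) = false by apply/eqP; lia.
by apply: IH; lia.
Qed.

Lemma z_late n k (d : 'I_n -> 'I_k) x t i : d i < t -> zst d x t i = zst d x (d i).+1 i.
Proof.
elim: t => [|t IH] h //.
case: (boolP (nat_of_ord (d i) == t)) => [/eqP <- //|ne].
rewrite /= ffunE (negbTE ne) IH //; lia.
Qed.

Lemma sched_rec n k (d : 'I_n -> 'I_k) x i :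
  let y := f160_sched d x in
  y i = (if d (prv i) < d i then y (prv i) else x (prv i)) &&
        (if d (nxt i) < d i then y (nxt i) else x (nxt i)).
Proof.
move=> y.
have Y : forall j, y j = zst d x (d j).+1 j by move=> j; rewrite /y sched_z z_late.
have Z : forall j, zst d x (d i) j = if d j < d i then y j else x j.
  move=> j; case: ltnP => h; last by rewrite z_early.
  by rewrite Y z_late.
by rewrite Y /= ffunE eqxx /f160 ffunE !Z.
Qed.

Lemma val_iter_nxt n (j : 'I_n) t : nat_of_ord (iter t (@nxt n) j) = (j + t) %% n.
Proof.
elim: t => [|t IH] /=; first by rewrite addn0 modn_small.
by rewrite IH -[((j + t) %% n).+1]addn1 modnDml addn1 addnS.
Qed.

Lemma val_iter_prv n (j : 'I_n) t : nat_of_ord (iter t (@prv n) j) = (j + t * n.-1) %% n.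
Proof.
elim: t => [|t IH] /=; first by rewrite addn0 modn_small.
by rewrite IH modnDml mulSnr addnA.
Qed.

Lemma iter_prv_n n (j : 'I_n) : iter n (@prv n) j = j.
Proof. apply: val_inj; rewrite /= val_iter_prv mulnC addnC modnMDl modn_small //. Qed.

Lemma iter_nxt_n n (j : 'I_n) : iter n (@nxt n) j = j.
Proof. apply: val_inj; rewrite /= val_iter_nxt addnC modnDl modn_small //. Qed.

Lemma iter_nxt_pred n (j : 'I_n) : iter n.-1 (@nxt n) j = prv j.
Proof.
case: n j => [|n] j; first by case: j.
by have := iter_nxt_n (prv j); rewrite iterSr nxt_prv /= => ->.
Qed.

Lemma iter_prv_pred n (j : 'I_n) : iter n.-1 (@prv n) j = nxt j.
Proof.
case: n j => [|n] j; first by case: j.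
by have := iter_prv_n (nxt j); rewrite iterSr prv_nxt /= => ->.
Qed.

Fixpoint runL n k (d : 'I_n -> 'I_k) (f : nat) (i : 'I_n) : nat :=
  if f is f'.+1 then (if d (prv i) < d i then (runL d f' (prv i)).+1 else 0) else 0.
Fixpoint runR n k (d : 'I_n -> 'I_k) (f : nat) (i : 'I_n) : nat :=
  if f is f'.+1 then (if d (nxt i) < d i then (runR d f' (nxt i)).+1 else 0) else 0.

Lemma runL_ge n k (d : 'I_n -> 'I_k) f j t : t <= runL d f j -> d (iter t (@prv n) j) + t <= d j.
Proof.
elim: f j t => [|f IH] j [|t] /=; try by rewrite addn0.
  by rewrite ltn0.
case: ifP => // h; rewrite ltnS => /IH; rewrite -iterSr iterS; lia.
Qed.

Lemma runR_ge n k (d : 'I_n -> 'I_k) f j t : t <= runR d f j -> d (iter t (@nxt n) j) + t <= d j.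
Proof.
elim: f j t => [|f IH] j [|t] /=; try by rewrite addn0.
  by rewrite ltn0.
case: ifP => // h; rewrite ltnS => /IH; rewrite -iterSr iterS; lia.
Qed.

Lemma runL_stable n k (d : 'I_n -> 'I_k) f j : runL d f j < f -> runL d f.+1 j = runL d f j.
Proof.
elim: f j => [|f IH] j //=.
case: ifP => // h; rewrite ltnS => /IH /= -> //.
Qed.

Lemma runR_stable n k (d : 'I_n -> 'I_k) f j : runR d f j < f -> runR d f.+1 j = runR d f j.
Proof.
elim: f j => [|f IH] j //=.
case: ifP => // h; rewrite ltnS => /IH /= -> //.
Qed.

Lemma runL_a n k (d : 'I_n -> 'I_k) f j t : t < runL d f j ->
  d (prv (iter t (@prv n) j)) < d (iter t (@prv n) j).
Proof.
elim: f j t => [|f IH] j t //=.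
case: ifP => // h; case: t => [|t] //= ; rewrite ltnS => /IH; by rewrite -iterSr iterS.
Qed.

Lemma runR_b n k (d : 'I_n -> 'I_k) f j t : t < runR d f j ->
  d (nxt (iter t (@nxt n) j)) < d (iter t (@nxt n) j).
Proof.
elim: f j t => [|f IH] j t //=.
case: ifP => // h; case: t => [|t] //= ; rewrite ltnS => /IH; by rewrite -iterSr iterS.
Qed.

Definition mL n k (d : 'I_n -> 'I_k) i := runL d n i.
Definition mR n k (d : 'I_n -> 'I_k) i := runR d n i.

Lemma runL_le n k (d : 'I_n -> 'I_k) f j : runL d f j <= f.
Proof. elim: f j => [|f IH] j //=; case: ifP => // _; exact: IH. Qed.
Lemma runR_le n k (d : 'I_n -> 'I_k) f j : runR d f j <= f.
Proof. elim: f j => [|f IH] j //=; case: ifP => // _; exact: IH. Qed.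

Lemma mL_lt n k (d : 'I_n -> 'I_k) i : mL d i < n.
Proof.
rewrite /mL ltn_neqAle runL_le andbT; apply/negP => /eqP h.
have := @runL_ge _ _ d n i n; rewrite h leqnn iter_prv_n => /(_ isT); have := ord_pos i; lia.
Qed.
Lemma mR_lt n k (d : 'I_n -> 'I_k) i : mR d i < n.
Proof.
rewrite /mR ltn_neqAle runR_le andbT; apply/negP => /eqP h.
have := @runR_ge _ _ d n i n; rewrite h leqnn iter_nxt_n => /(_ isT); have := ord_pos i; lia.
Qed.

Lemma mL_eq n k (d : 'I_n -> 'I_k) i :
  mL d i = if d (prv i) < d i then (mL d (prv i)).+1 else 0.
Proof.
rewrite /mL; have n0 := ord_pos i; case: n i d n0 => [|n] // i d _ /=.
case: ifP => // h; congr _.+1; apply/esym/runL_stable.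
rewrite ltn_neqAle runL_le andbT; apply/negP => /eqP e.
have := @runL_ge _ _ d n (prv i) n; rewrite e leqnn -iterSr => /(_ isT).
have -> : iter n.+1 (@prv n.+1) i = i by exact: iter_prv_n.
move=> H; have := leq_ltn_trans (leq_trans (leq_addr n _) H) h; by rewrite ltnn.
Qed.
Lemma mR_eq n k (d : 'I_n -> 'I_k) i :
  mR d i = if d (nxt i) < d i then (mR d (nxt i)).+1 else 0.
Proof.
rewrite /mR; have n0 := ord_pos i; case: n i d n0 => [|n] // i d _ /=.
case: ifP => // h; congr _.+1; apply/esym/runR_stable.
rewrite ltn_neqAle runR_le andbT; apply/negP => /eqP e.
have := @runR_ge _ _ d n (nxt i) n; rewrite e leqnn -iterSr => /(_ isT).
have -> : iter n.+1 (@nxt n.+1) i = i by exact: iter_nxt_n.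
move=> H; have := leq_ltn_trans (leq_trans (leq_addr n _) H) h; by rewrite ltnn.
Qed.

Lemma mR_full n k (d : 'I_n -> 'I_k) i : 1 < n -> mR d i = n.-1 -> d (prv i) < d i.
Proof.
move=> n1 h; have := @runR_ge _ _ d n i n.-1; rewrite -/(mR d i) h leqnn iter_nxt_pred => /(_ isT); lia.
Qed.
Lemma mL_full n k (d : 'I_n -> 'I_k) i : 1 < n -> mL d i = n.-1 -> d (nxt i) < d i.
Proof.
move=> n1 h; have := @runL_ge _ _ d n i n.-1; rewrite -/(mL d i) h leqnn iter_prv_pred => /(_ isT); lia.
Qed.

Lemma ord_eqE n (u v : 'I_n) : (u == v) = (nat_of_ord u == nat_of_ord v).
Proof. by []. Qed.

Definition ep n (p : 'I_n) : config n := [ffun j => j != p].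
Definition off n (i p : 'I_n) : nat := if nat_of_ord i <= p then p - i else p + n - i.
Definition LP (n m o : nat) : Prop := (o = 0 /\ 0 < m) \/ n < o + m \/ o + m.+1 = n.
Definition RP (m o : nat) : Prop := o < m \/ o = m.+1.

Lemma off_lt n (i p : 'I_n) : off i p < n.
Proof. rewrite /off; have := ltn_ord i; have := ltn_ord p; cif => /=; lia. Qed.

Lemma off_prv n (i p : 'I_n) : off (prv i) p = if off i p == n.-1 then 0 else (off i p).+1.
Proof. rewrite /off val_prv; have := ltn_ord i; have := ltn_ord p; cif => /=; lia. Qed.

Lemma off_nxt n (i p : 'I_n) : off (nxt i) p = if off i p == 0 then n.-1 else (off i p).-1.
Proof. rewrite /off val_nxt; have := ltn_ord i; have := ltn_ord p; cif => /=; lia. Qed.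

Lemma prv_eq n (i p : 'I_n) : (prv i == p) = (off i p == n.-1).
Proof. rewrite ord_eqE /off val_prv; have := ltn_ord i; have := ltn_ord p; cif => /=; lia. Qed.

Lemma nxt_eq n (i p : 'I_n) : 1 < n -> (nxt i == p) = (off i p == 1).
Proof. rewrite ord_eqE /off val_nxt; have := ltn_ord i; have := ltn_ord p; cif => /=; lia. Qed.

Lemma memb n k (d : 'I_n -> 'I_k) (p : 'I_n) : 1 < n -> forall i,
  (f160_sched d (ep p) i = false) <-> (LP n (mL d i) (off i p) \/ RP (mR d i) (off i p)).
Proof.
move=> n1.
suff H : forall t i, d i < t -> ((f160_sched d (ep p) i = false) <->
   (LP n (mL d i) (off i p) \/ RP (mR d i) (off i p))).
  by move=> i; apply: (H (d i).+1).
elim=> [|t IH] i // lt.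
have hA : (if d (prv i) < d i then f160_sched d (ep p) (prv i) else ep p (prv i)) = false
          <-> LP n (mL d i) (off i p).
  rewrite (mL_eq d i); case: ifP => a.
    rewrite IH; last by lia.
    rewrite (mR_eq d (prv i)) nxt_prv ltnNge (ltnW a) /= off_prv.
    have := mL_lt d (prv i); have := off_lt i p; rewrite /LP /RP; cif; lia.
  rewrite ffunE prv_eq; have := off_lt i p; rewrite /LP; cif; lia.
have hB : (if d (nxt i) < d i then f160_sched d (ep p) (nxt i) else ep p (nxt i)) = false
          <-> RP (mR d i) (off i p).
  rewrite (mR_eq d i); case: ifP => b.
    rewrite IH; last by lia.
    rewrite (mL_eq d (nxt i)) prv_nxt ltnNge (ltnW b) /= off_nxt.
    have := mR_lt d (nxt i); have := off_lt i p; rewrite /LP /RP; cif; lia.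
  rewrite ffunE nxt_eq //; have := off_lt i p; rewrite /RP; cif; lia.
rewrite sched_rec; move: hA hB.
case: (if _ then _ else _); case: (if _ then _ else _); rewrite /=; intuition.
Qed.

Lemma LD_a n m m' mu' : 6 < n -> 0 < m -> m < n -> m' < n -> mu'.+1 < n ->
  (forall o, o < n -> (LP n m o \/ RP m' o <-> LP n 0 o \/ RP mu' o)) ->
  (m = 2 \/ m = 3) /\ m' = mu' /\ n <= m' + 4.
Proof.
move=> n7; have [N ->] : exists N, n = N + 7 by exists (n - 7); lia.
move=> m0 mn m'n mu'n H.
have F1 : 2 <= m \/ m' = N + 5.
  by have := H (N + 6) ltac:(lia); clear -m0 mn m'n mu'n; rewrite /LP /RP; lia.
have F2 : (m = N + 6 \/ m = N + 4 \/ 2 < m' \/ m' = 1) <-> (2 < mu' \/ mu' = 1).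
  by have := H 2 ltac:(lia); clear -m0 mn m'n mu'n; rewrite /LP /RP; lia.
have F3 : (3 <= m \/ m = 1 \/ m' = N + 6 \/ m' = N + 4) <-> mu' = N + 4.
  by have := H (N + 5) ltac:(lia); clear -m0 mn m'n mu'n; rewrite /LP /RP; lia.
have F4 : (4 <= m \/ m = 2 \/ N + 4 < m' \/ m' = N + 3) <-> (N + 4 < mu' \/ mu' = N + 3).
  by have := H (N + 4) ltac:(lia); clear -m0 mn m'n mu'n; rewrite /LP /RP; lia.
have F5 : (5 <= m \/ m = 3 \/ N + 3 < m' \/ m' = N + 2) <-> (N + 3 < mu' \/ mu' = N + 2).
  by have := H (N + 3) ltac:(lia); clear -m0 mn m'n mu'n; rewrite /LP /RP; lia.
have F6 : (m' = 0 \/ N + 7 < m' + m \/ m' + m.+1 = N + 7) <-> (m' = N + 6 \/ m' < mu' \/ m' = mu'.+1).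
  by have := H m' ltac:(lia); clear -m0 mn m'n mu'n; rewrite /LP /RP; lia.
clear H.
have G1 : N + 3 <= mu' by clear -F3 F4 m0 mn m'n mu'n; lia.
have G2 : m = 2 \/ m = 3 by clear -F1 F3 F4 G1 m0 mn m'n mu'n; lia.
case: G2 => em; subst m.
  have : mu' = N + 3 \/ mu' = N + 5 by clear -F4 G1 mu'n; lia.
  case=> emu; subst mu'.
    by clear -F2 F3 F5 F6 m'n; lia.
  by clear -F2 F3 F5 F6 m'n; lia.
have emu : mu' = N + 4 by clear -F3; lia.
subst mu'; clear -F2 F4 F6 m'n; lia.
Qed.

Lemma LD_a2 n mc muc mu'c : 6 < n -> 0 < mc -> mc <= 2 -> muc < n -> mu'c < n ->
  (mu'c = 0 \/ n <= mu'c + 3) ->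
  (forall o, o < n -> (LP n mc o \/ RP 0 o <-> LP n muc o \/ RP mu'c o)) ->
  mu'c = 0 /\ 0 < muc.
Proof.
move=> n7 h1 h2 h3 h4 h5 H.
have F0 := H 0 ltac:(lia); have F2 := H 2 ltac:(lia); clear H.
rewrite /LP /RP in F0 F2; lia.
Qed.


Definition mir n o := if o == 0 then 0 else n - o.

Lemma mirror n m m' o : 1 < n -> m < n -> m' < n -> o < n ->
  (LP n m o \/ RP m' o <-> LP n m' (mir n o) \/ RP m (mir n o)).
Proof. move=> *; rewrite /mir /LP /RP; case: eqP => ?; lia. Qed.

Lemma mir_lt n o : 0 < n -> o < n -> mir n o < n.
Proof. rewrite /mir; case: (o =P 0); lia. Qed.
Lemma mirK n o : o < n -> mir n (mir n o) = o.
Proof. rewrite /mir; case: (o =P 0) => ?; cif; lia. Qed.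

Lemma mirror_H n m m' mu mu' : 1 < n -> m < n -> m' < n -> mu < n -> mu' < n ->
  (forall o, o < n -> (LP n m o \/ RP m' o <-> LP n mu o \/ RP mu' o)) ->
  (forall o, o < n -> (LP n m' o \/ RP m o <-> LP n mu' o \/ RP mu o)).
Proof.
move=> n1 h1 h2 h3 h4 H o on.
have o' := @mir_lt n o (ltnW n1) on.
have := H (mir n o) o'; have := @mirror n m' m o n1 h2 h1 on; have := @mirror n mu' mu o n1 h4 h3 on.
tauto.
Qed.

Lemma LD_b n m m' mu : 6 < n -> 0 < m' -> m' < n -> m < n -> mu.+1 < n ->
  (forall o, o < n -> (LP n m o \/ RP m' o <-> LP n mu o \/ RP 0 o)) ->
  (m' = 2 \/ m' = 3) /\ m = mu /\ n <= m + 4.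
Proof.
move=> n7 h1 h2 h3 h4 H; apply: LD_a => //.
apply: mirror_H H => //; lia.
Qed.

Lemma LD_b2 n mc' muc mu'c : 6 < n -> 0 < mc' -> mc' <= 2 -> muc < n -> mu'c < n ->
  (muc = 0 \/ n <= muc + 3) ->
  (forall o, o < n -> (LP n 0 o \/ RP mc' o <-> LP n muc o \/ RP mu'c o)) ->
  muc = 0 /\ 0 < mu'c.
Proof.
move=> n7 h1 h2 h3 h4 h5 H; apply: (@LD_a2 n mc' mu'c muc) => //.
apply: mirror_H H => //; lia.
Qed.

Definition shf n (i : 'I_n) (o : nat) : 'I_n := Ordinal (ltn_pmod (i + o) (ord_pos i)).

Lemma off_shf n (i : 'I_n) o : o < n -> off i (shf i o) = o.
Proof.
move=> on; rewrite /off /=; have := ltn_ord i; case: (ltnP (i + o) n) => h lt.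
  rewrite modn_small //; cif; lia.
have -> : i + o = (i + o - n) + n by lia.
rewrite modnDr modn_small; [cif; lia | lia].
Qed.

Definition aa n k (d : 'I_n -> 'I_k) i := d (prv i) < d i.
Definition bb n k (d : 'I_n -> 'I_k) i := d (nxt i) < d i.

Lemma mL_pos n k (d : 'I_n -> 'I_k) j : (0 < mL d j) = aa d j.
Proof. rewrite mL_eq /aa; by case: ifP. Qed.
Lemma mR_pos n k (d : 'I_n -> 'I_k) j : (0 < mR d j) = bb d j.
Proof. rewrite mR_eq /bb; by case: ifP. Qed.

Lemma cellH n k k' (d : 'I_n -> 'I_k) (d' : 'I_n -> 'I_k') : 1 < n ->
  (forall x, f160_sched d x = f160_sched d' x) ->
  forall i o, o < n -> (LP n (mL d i) o \/ RP (mR d i) o <-> LP n (mL d' i) o \/ RP (mR d' i) o).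
Proof.
move=> n1 Hf i o on.
have := memb d (shf i o) n1 i; have := memb d' (shf i o) n1 i.
rewrite off_shf // Hf => A B.
by rewrite -A -B.
Qed.

Definition Q2 n k k' (d : 'I_n -> 'I_k) (d' : 'I_n -> 'I_k') i :=
  [/\ aa d (prv i), aa d' (prv i), ~~ bb d (prv i), ~~ bb d' (prv i) &
      forall t, t + 4 < n -> bb d (iter t (@nxt n) i) && bb d' (iter t (@nxt n) i)].
Definition Q1 n k k' (d : 'I_n -> 'I_k) (d' : 'I_n -> 'I_k') i :=
  [/\ bb d (nxt i), bb d' (nxt i), ~~ aa d (nxt i), ~~ aa d' (nxt i) &
      forall t, t + 4 < n -> aa d (iter t (@prv n) i) && aa d' (iter t (@prv n) i)].

Lemma ML_a n k k' (d : 'I_n -> 'I_k) (d' : 'I_n -> 'I_k') i : 8 < n ->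
  (forall x, f160_sched d x = f160_sched d' x) ->
  aa d i -> ~~ aa d' i -> Q2 d d' i.
Proof.
move=> n8 Hf a na.
have n1 : 1 < n by lia.
have H := cellH n1 Hf.
have m1 : 0 < mL d i by rewrite mL_eq; move: a; rewrite /aa => ->.
have m0 : mL d' i = 0 by rewrite mL_eq; move: na; rewrite /aa => /negbTE ->.
have mr' : (mR d' i).+1 < n.
  have := mR_lt d' i; case: (boolP (mR d' i == n.-1)) => [/eqP e|ne]; last by lia.
  by move: (mR_full n1 e) na; rewrite /aa => ->.
have [m23 [eqR geR]] : (mL d i = 2 \/ mL d i = 3) /\ mR d i = mR d' i /\ n <= mR d i + 4.
  apply: LD_a => //; [lia | exact: mL_lt | exact: mR_lt | move=> o on; rewrite -m0; exact: H].
set c := prv i.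
have mLc : mL d i = (mL d c).+1 by rewrite mL_eq; move: a; rewrite /aa => ->.
have mRc : mR d c = 0.
  rewrite mR_eq /c nxt_prv; move: a; rewrite /aa => a; by rewrite ltnNge (ltnW a).
have mR'c : mR d' c = 0 \/ n <= mR d' c + 3.
  rewrite mR_eq /c nxt_prv; case: ifP => _; lia.
have [e1 e2] : mR d' c = 0 /\ 0 < mL d' c.
  apply: (@LD_a2 n (mL d c)) => //; [lia | lia | lia | exact: mL_lt | exact: mR_lt |].
  move=> o on; rewrite -mRc; exact: H.
split.
- rewrite -mL_pos -/c; lia.
- by rewrite -mL_pos -/c.
- by rewrite -mR_pos -/c mRc.
- by rewrite -mR_pos -/c e1.
- move=> t t4; apply/andP; split; [apply: (@runR_b _ _ d n) | apply: (@runR_b _ _ d' n)]; rewrite -/(mR _ i); lia.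
Qed.

Lemma ML_b n k k' (d : 'I_n -> 'I_k) (d' : 'I_n -> 'I_k') i : 8 < n ->
  (forall x, f160_sched d x = f160_sched d' x) ->
  bb d i -> ~~ bb d' i -> Q1 d d' i.
Proof.
move=> n8 Hf b nb.
have n1 : 1 < n by lia.
have H := cellH n1 Hf.
have m1 : 0 < mR d i by rewrite mR_eq; move: b; rewrite /bb => ->.
have m0 : mR d' i = 0 by rewrite mR_eq; move: nb; rewrite /bb => /negbTE ->.
have ml' : (mL d' i).+1 < n.
  have := mL_lt d' i; case: (boolP (mL d' i == n.-1)) => [/eqP e|ne]; last by lia.
  by move: (mL_full n1 e) nb; rewrite /bb => ->.
have [m23 [eqL geL]] : (mR d i = 2 \/ mR d i = 3) /\ mL d i = mL d' i /\ n <= mL d i + 4.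
  apply: LD_b => //; [lia | exact: mR_lt | exact: mL_lt | move=> o on; rewrite -m0; exact: H].
set c := nxt i.
have mRc : mR d i = (mR d c).+1 by rewrite mR_eq; move: b; rewrite /bb => ->.
have mLc : mL d c = 0.
  rewrite mL_eq /c prv_nxt; move: b; rewrite /bb => b; by rewrite ltnNge (ltnW b).
have mL'c : mL d' c = 0 \/ n <= mL d' c + 3.
  rewrite mL_eq /c prv_nxt; case: ifP => _; lia.
have [e1 e2] : mL d' c = 0 /\ 0 < mR d' c.
  apply: (@LD_b2 n (mR d c)) => //; [lia | lia | lia | exact: mL_lt | exact: mR_lt |].
  move=> o on; rewrite -mLc; exact: H.
split.
- rewrite -mR_pos -/c; lia.
- by rewrite -mR_pos -/c.
- by rewrite -mL_pos -/c mLc.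
- by rewrite -mL_pos -/c e1.
- move=> t t4; apply/andP; split; [apply: (@runL_a _ _ d n) | apply: (@runL_a _ _ d' n)]; rewrite -/(mL _ i); lia.
Qed.

Lemma iter_off n (i j : 'I_n) : iter (off i j) (@nxt n) i = j.
Proof.
apply: val_inj; rewrite -[val _]/(nat_of_ord _) val_iter_nxt /off.
have := ltn_ord i; have := ltn_ord j; case: ifP => h hj hi.
  by rewrite subnKC // modn_small.
have -> : i + (j + n - i) = j + n by lia.
by rewrite modnDr modn_small.
Qed.

Lemma iter_offp n (i j : 'I_n) : iter (off j i) (@prv n) i = j.
Proof.
have := iter_off j i; move: (off j i) => r <-.
elim: r => [|r IH] //; by rewrite iterSr iterS prv_nxt.
Qed.

Lemma off0 n (i j : 'I_n) : off i j = 0 -> i = j.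
Proof. by move=> h; have := iter_off i j; rewrite h. Qed.

Lemma bb_aa n k (d : 'I_n -> 'I_k) j : bb d (prv j) -> ~~ aa d j.
Proof. rewrite /bb /aa nxt_prv -leqNgt; exact: ltnW. Qed.
Lemma aa_bb n k (d : 'I_n -> 'I_k) j : aa d (nxt j) -> ~~ bb d j.
Proof. rewrite /bb /aa prv_nxt -leqNgt; exact: ltnW. Qed.

Lemma Q2_sym n k k' (d : 'I_n -> 'I_k) (d' : 'I_n -> 'I_k') i : Q2 d d' i -> Q2 d' d i.
Proof. case=> h1 h2 h3 h4 h5; split=> // t /h5; by rewrite andbC. Qed.
Lemma Q1_sym n k k' (d : 'I_n -> 'I_k) (d' : 'I_n -> 'I_k') i : Q1 d d' i -> Q1 d' d i.
Proof. case=> h1 h2 h3 h4 h5; split=> // t /h5; by rewrite andbC. Qed.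

Lemma adiff_Q2 n k k' (d : 'I_n -> 'I_k) (d' : 'I_n -> 'I_k') i : 8 < n ->
  (forall x, f160_sched d x = f160_sched d' x) -> aa d i != aa d' i -> Q2 d d' i.
Proof.
move=> n8 Hf; case: (boolP (aa d i)) => a; case: (boolP (aa d' i)) => a' //= _.
  exact: ML_a.
by apply: Q2_sym; apply: ML_a => // x; rewrite Hf.
Qed.

Lemma bdiff_Q1 n k k' (d : 'I_n -> 'I_k) (d' : 'I_n -> 'I_k') i : 8 < n ->
  (forall x, f160_sched d x = f160_sched d' x) -> bb d i != bb d' i -> Q1 d d' i.
Proof.
move=> n8 Hf; case: (boolP (bb d i)) => a; case: (boolP (bb d' i)) => a' //= _.
  exact: ML_b.
by apply: Q1_sym; apply: ML_b => // x; rewrite Hf.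
Qed.

Lemma off_lt' n (i j : 'I_n) : off i j < n.
Proof. exact: off_lt. Qed.

Lemma uniqA n k k' (d : 'I_n -> 'I_k) (d' : 'I_n -> 'I_k') i j : 8 < n ->
  (forall x, f160_sched d x = f160_sched d' x) ->
  aa d i != aa d' i -> aa d j != aa d' j -> i = j.
Proof.
move=> n8 Hf di dj.
case: (adiff_Q2 n8 Hf di) => ai a'i nbi nb'i Bi.
case: (adiff_Q2 n8 Hf dj) => aj a'j nbj nb'j Bj.
case: (eqVneq i j) => // ne; exfalso.
have ej := iter_off i j; have rn := off_lt i j.
have r0 : off i j <> 0 by move=> /off0 e; rewrite e eqxx in ne.
move: ej rn r0; case: (off i j) => [|s] // ej rn _.
have pj : prv j = iter s (@nxt n) i by rewrite -ej /= prv_nxt.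
have [lt4|ge4] := ltnP (s + 4) n.
  have /andP [b1 b2] := Bi s lt4; rewrite -pj in b1 b2.
  by move: dj; rewrite (negbTE (bb_aa b1)) (negbTE (bb_aa b2)).
case: (boolP (s == n - 2)) => [/eqP es|ns].
  have e : j = prv i.
    rewrite -ej es; have -> : (n - 2).+1 = n.-1 by clear -n8; lia.
    exact: iter_nxt_pred.
  by move: dj; rewrite e ai a'i.
have /andP [b1 _] := Bj (n - 2 - s) ltac:(clear -n8 ge4 ns rn; lia).
have e : iter (n - 2 - s) (@nxt n) j = prv i.
  rewrite -ej -iterD; have -> : n - 2 - s + s.+1 = n.-1 by clear -n8 ge4 ns rn; lia.
  exact: iter_nxt_pred.
by rewrite e in b1; rewrite b1 in nbi.
Qed.

Lemma uniqB n k k' (d : 'I_n -> 'I_k) (d' : 'I_n -> 'I_k') i j : 8 < n ->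
  (forall x, f160_sched d x = f160_sched d' x) ->
  bb d i != bb d' i -> bb d j != bb d' j -> i = j.
Proof.
move=> n8 Hf di dj.
case: (bdiff_Q1 n8 Hf di) => bi b'i nai na'i Ai.
case: (bdiff_Q1 n8 Hf dj) => bj b'j naj na'j Aj.
case: (eqVneq j i) => [->//|ne]; exfalso.
have ej := iter_offp i j; have rn := off_lt j i.
have r0 : off j i <> 0 by move=> /off0 e; rewrite e eqxx in ne.
move: ej rn r0; case: (off j i) => [|s] // ej rn _.
have pj : nxt j = iter s (@prv n) i by rewrite -ej iterS nxt_prv.
have [lt4|ge4] := ltnP (s + 4) n.
  have /andP [b1 b2] := Ai s lt4; rewrite -pj in b1 b2.
  by move: dj; rewrite (negbTE (aa_bb b1)) (negbTE (aa_bb b2)).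
case: (boolP (s == n - 2)) => [/eqP es|ns].
  have e : j = nxt i.
    rewrite -ej es; have -> : (n - 2).+1 = n.-1 by clear -n8; lia.
    exact: iter_prv_pred.
  by move: dj; rewrite e bi b'i.
have /andP [b1 _] := Aj (n - 2 - s) ltac:(clear -n8 ge4 ns rn; lia).
have e : iter (n - 2 - s) (@prv n) j = nxt i.
  rewrite -ej -iterD; have -> : n - 2 - s + s.+1 = n.-1 by clear -n8 ge4 ns rn; lia.
  exact: iter_prv_pred.
by rewrite e in b1; rewrite b1 in nai.
Qed.

Lemma mixAB n k k' (d : 'I_n -> 'I_k) (d' : 'I_n -> 'I_k') i j : 8 < n ->
  (forall x, f160_sched d x = f160_sched d' x) ->
  aa d i != aa d' i -> bb d j != bb d' j -> False.
Proof.
move=> n8 Hf di dj.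
case: (adiff_Q2 n8 Hf di) => ai a'i nbi nb'i Bi.
case: (bdiff_Q1 n8 Hf dj) => bj b'j naj na'j Aj.
have ej := iter_off i j; have rn := off_lt i j.
move: ej rn; case: (off i j) => [|[|r]] ej rn.
- have /andP [b1 b2] := Bi 0 ltac:(clear -n8; lia).
  by move: dj; rewrite -ej b1 b2.
- have /andP [b1 b2] := Bi 1 ltac:(clear -n8; lia).
  by move: dj; rewrite -ej b1 b2.
have [lt4|ge4] := ltnP (r.+2 + 4) n.
  have /andP [b1 b2] := Bi r.+2 lt4.
  by move: dj; rewrite -ej b1 b2.
case: (boolP (r.+2 == n - 1)) => [/eqP es|ns1].
  have e : j = prv i.
    rewrite -ej es; have -> : n - 1 = n.-1 by clear -n8; lia.
    exact: iter_nxt_pred.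
  by move: dj; rewrite e (negbTE nbi) (negbTE nb'i).
case: (boolP (r.+2 == n - 2)) => [/eqP es|ns2].
  have e : nxt j = prv i.
    rewrite -ej -iterS es; have -> : (n - 2).+1 = n.-1 by clear -n8; lia.
    exact: iter_nxt_pred.
  by rewrite e in bj; rewrite bj in nbi.
have /andP [a1 _] := Aj 1 ltac:(clear -n8; lia).
have /andP [b1 _] := Bi r ltac:(clear -n8 ge4 ns1 ns2 rn; lia).
have e : iter 1 (@prv n) j = nxt (iter r (@nxt n) i) by rewrite /= -ej iterS prv_nxt.
by rewrite e in a1; move: (aa_bb a1); rewrite b1.
Qed.

Lemma lab1 n k (d : 'I_n -> 'I_k) i : lab d i (nxt i) = ~~ aa d (nxt i).
Proof. by rewrite /lab /aa prv_nxt -leqNgt. Qed.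
Lemma lab2 n k (d : 'I_n -> 'I_k) i : lab d (nxt i) i = ~~ bb d i.
Proof. by rewrite /lab /bb -leqNgt. Qed.

Lemma negb_neq (a b : bool) : (~~ a != ~~ b) = (a != b).
Proof. by case: a; case: b. Qed.

Theorem mainTheorem20 (n : nat) (hn : 8 < n) (k k' : nat)
  (d : 'I_n -> 'I_k) (d' : 'I_n -> 'I_k') :
  ordered_partition d -> ordered_partition d' ->
  special160 d d' ->
  n_diff_arcs d d' = 1.
Proof.
move=> _ _ [neq Hf].
rewrite /n_diff_arcs.
have EA : [set i | lab d i (nxt i) != lab d' i (nxt i)] = [set i | aa d (nxt i) != aa d' (nxt i)].
  by apply/setP=> i; rewrite !inE !lab1 negb_neq.
have EB : [set i | lab d (nxt i) i != lab d' (nxt i) i] = [set i | bb d i != bb d' i].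
  by apply/setP=> i; rewrite !inE !lab2 negb_neq.
rewrite EA EB.
case: (pickP (fun i => (aa d (nxt i) != aa d' (nxt i)) || (bb d i != bb d' i))) => [i0 | none].
  case/orP => h.
    have -> : [set i | aa d (nxt i) != aa d' (nxt i)] = [set i0].
      apply/setP=> j; rewrite !inE; apply/idP/idP => [hj|/eqP ->//].
      by apply/eqP/nxt_inj; apply: (uniqA hn Hf hj h).
    have -> : [set i | bb d i != bb d' i] = set0.
      apply/setP=> j; rewrite !inE; apply/negbTE/negP => hj; exact: (mixAB hn Hf h hj).
    by rewrite cards1 cards0.
  have -> : [set i | bb d i != bb d' i] = [set i0].
    apply/setP=> j; rewrite !inE; apply/idP/idP => [hj|/eqP ->//].
    by apply/eqP; apply: (uniqB hn Hf hj h).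
  have -> : [set i | aa d (nxt i) != aa d' (nxt i)] = set0.
    apply/setP=> j; rewrite !inE; apply/negbTE/negP => hj; exact: (mixAB hn Hf hj h).
  by rewrite cards1 cards0.
exfalso; apply: neq => i; have := none i; rewrite /= !lab1 !lab2.
by case: (aa d _); case: (aa d' _); case: (bb d _); case: (bb d' _).
Qed.
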